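(* Let $\mathsf{Prop}=\{p\}$, $\mathsf{Act}=\{a,b,c,d,e\}$, $\mathsf{Op}_{[\cdot]}=\{[\alpha]:\alpha\in\mathsf{Act}\}$ and $\mathsf{Op}_{\langle\cdot\rangle}=\{\langle\alpha\rangle^{\ge1}:\alpha\in\mathsf{Act}\}$. Let $\mathsf{L}'$ be a monotone fragment of $\mathsf{ML}(\mathsf{Prop},\mathsf{Act})$ with operator set $\mathsf{Op}'$ containing $p$, such that: $\langle\alpha\rangle^{\ge k}\notin\mathsf{Op}'$ for all $k\ge2$ and $\alpha\in\mathsf{Act}$; $\mathsf{Op}_{[\cdot]}\subseteq\mathsf{Op}'$ or $\mathsf{Op}_{\langle\cdot\rangle}\subseteq\mathsf{Op}'$; $\wedge\in\mathsf{Op}'$ implies $\mathsf{Op}_{[\cdot]}\subseteq\mathsf{Op}'$; and $\vee\in\mathsf{Op}'$ implies $\mathsf{Op}_{\langle\cdot\rangle}\subseteq\mathsf{Op}'$. Then for every $n\in\mathbb{N}$ there is a sample $\mathcal{S}=(\mathcal{P},\mathcal{N})$ of Kripke structures in $\mathcal{K}(\mathsf{Prop},\mathsf{Act})$ such that $k:=\sum_{K\in\mathcal{P}\cup\mathcal{N}}|Q_K|\ge n$ and the minimal size of an $\mathcal{S}$-separating $\mathsf{L}'$-formula is at least $2^{k/25}$.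
   Context: $\mathsf{ML}(\mathsf{Prop},\mathsf{Act})$-formulas: $\varphi::=q\mid\neg\varphi\mid\varphi\vee\varphi\mid\varphi\wedge\varphi\mid\langle\alpha\rangle^{\ge k}\varphi\mid[\alpha]\varphi$ with $q\in\mathsf{Prop}$, $\alpha\in\mathsf{Act}$, $k\ge1$. A fragment is given by a subset $\mathsf{Op}'$ of these operators (propositions, $\neg,\vee,\wedge$, each $\langle\alpha\rangle^{\ge k}$, each $[\alpha]$), its formulas being those using only operators of $\mathsf{Op}'$; it is monotone if $\neg\notin\mathsf{Op}'$ and at most one of $\vee,\wedge$ is in $\mathsf{Op}'$. $\mathsf{sz}(\varphi)$ is the number of distinct subformulas. $\mathcal{K}(\mathsf{Prop},\mathsf{Act})$: Kripke structures $K=(Q,I,A,\delta,P,\pi)$ with $Q=Q_K$ a finite non-empty set of states, $I\subseteq Q$ non-empty, $A\subseteq\mathsf{Act}$ non-empty, $\delta:Q\times A\to 2^Q$ (take $\delta(q,\alpha)=\emptyset$ for $\alpha\notin A$), $P\subseteq\mathsf{Prop}$, $\pi:Q\to 2^P$. Semantics at states: $q\models r$ iff $r\in\pi(q)$; Boolean connectives as usual; $q\models[\alpha]\varphi$ iff $\delta(q,\alpha)\subseteq\{q':q'\models\varphi\}$; $q\models\langle\alpha\rangle^{\ge k}\varphi$ iff $|\delta(q,\alpha)\cap\{q':q'\models\varphi\}|\ge k$. $K\models\varphi$ iff $q\models\varphi$ for all $q\in I$. A formula is $\mathcal{S}$-separating if satisfied by all structures in $\mathcal{P}$ and by none in $\mathcal{N}$.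 *)

(* Defs.v *)
From HB Require Import structures.
From Stdlib Require Import List.
From mathcomp Require Import all_boot.
Set Implicit Arguments. Unset Strict Implicit. Unset Printing Implicit Defensive.

Section Formulas.
Variables (Prp Act : eqType).

(* FDia al k f  is  <al>^{>= k} f  (only k >= 1 is used in fragments, see
   valid_op). *)
Inductive form : Type :=
| FProp of Prp
| FNeg of form
| FOr of form & form
| FAnd of form & form
| FDia of Act & nat & form
| FBox of Act & form.

Definition form_eq_dec : comparable form.
Proof.
rewrite /comparable /decidable; decide equality;
  try exact: (eq_comparable _ _); try exact: (eq_comparable nat).
Defined.

HB.instance Definition _ := hasDecEq.Build form (compareP form_eq_dec).

Inductive op : Type :=
| OProp of Prp
| ONeg
| OOr
| OAnd
| ODia of Act & nat
| OBox of Act.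

Definition valid_op (o : op) : Prop :=
  match o with ODia _ k => 1 <= k | _ => True end.

Definition fragment := op -> Prop.

Fixpoint in_frag (Op' : fragment) (f : form) : Prop :=
  match f with
  | FProp r => Op' (OProp r)
  | FNeg g => Op' ONeg /\ in_frag Op' g
  | FOr g h => Op' OOr /\ in_frag Op' g /\ in_frag Op' h
  | FAnd g h => Op' OAnd /\ in_frag Op' g /\ in_frag Op' h
  | FDia al k g => Op' (ODia al k) /\ in_frag Op' g
  | FBox al g => Op' (OBox al) /\ in_frag Op' g
  end.

Definition monotone (Op' : fragment) : Prop :=
  ~ Op' ONeg /\ ~ (Op' OOr /\ Op' OAnd).

Fixpoint subf (f : form) : seq form :=
  f :: match f with
       | FProp _ => [::]
       | FNeg g => subf g
       | FOr g h => subf g ++ subf h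
       | FAnd g h => subf g ++ subf h
       | FDia _ _ g => subf g
       | FBox _ g => subf g
       end.

Definition sz (f : form) : nat := size (undup (subf f)).

(* The state set Q is represented as 'I_nst (any finite non-empty set up to
   renaming). *)
Record kripke : Type := Kripke {
  nst : nat;
  nst_pos : 0 < nst;
  init : {set 'I_nst};
  init_ne : init != set0;
  acts : pred Act;
  acts_ne : exists al, acts al;
  delta : 'I_nst -> Act -> {set 'I_nst};
  delta_out : forall q al, ~~ acts al -> delta q al = set0;
  props : pred Prp;
  lab : 'I_nst -> pred Prp;
  lab_sub : forall q r, lab q r -> props r
}.

Fixpoint sat (K : kripke) (q : 'I_(nst K)) (f : form) {struct f} : bool :=
  match f with
  | FProp r => lab q r
  | FNeg g => ~~ sat q g
  | FOr g h => sat q g || sat q h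
  | FAnd g h => sat q g && sat q h
  | FDia al k g => k <= #|delta q al :&: [set q' | sat q' g]|
  | FBox al g => delta q al \subset [set q' | sat q' g]
  end.

Definition models (K : kripke) (f : form) : Prop :=
  forall q, q \in init K -> sat q f.

Definition separating (Pos Neg : seq kripke) (f : form) : Prop :=
  (forall K, In K Pos -> models K f) /\ (forall K, In K Neg -> ~ models K f).

Definition total_states (s : seq kripke) : nat := sumn (map nst s).

End Formulas.

(* Prop = {p} : unit (p = tt);  Act = {a,b,c,d,e} *)
Inductive act5 : Type := a_ | b_ | c_ | d_ | e_.

Definition act5_eq_dec : comparable act5.
Proof. rewrite /comparable /decidable; decide equality. Defined.
HB.instance Definition _ := hasDecEq.Build act5 (compareP act5_eq_dec).

(* Main.v *)
Require Import Defs.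
From Stdlib Require Import List.
From HB Require Import structures.
From mathcomp Require Import all_boot.
From mathcomp Require Import zify.
From Stdlib Require Import Classical.
Set Implicit Arguments. Unset Strict Implicit.

Section Counter.
Variable n : nat.
Definition st := option (nat * nat).

Definition stepD (s : st) (x : act5) : st :=
  match s with None => None | Some (k, p) =>
  match x with
  | a_ => if p == n then (if k == 1 then Some (2, p) else None) else Some (k, p)
  | b_ => if p < n then (if k == 2 then Some (0, p) else None)
          else if p == n then (if k == 0 then Some (1, p) else None)
          else if k == 2 then None else Some (k, p)
  | c_ => if p == 0 then None else Some (k, p.-1)
  | d_ => if p < n + n then Some (k, p.+1) else None
  | e_ => None
  end end.

Definition runD (s : st) (w : seq act5) := foldl stepD s w.

Fixpoint AC j := if j is j'.+1 then a_ :: c_ :: AC j' else [::].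

Lemma runD_cons s x w : runD s (x :: w) = runD (stepD s x) w.
Proof. by []. Qed.

Lemma runD_None w : runD None w = None.
Proof. by elim: w. Qed.

Lemma AC_a j k p : (p < n \/ n + j <= p) -> j <= p -> runD (Some (k, p)) (AC j) = Some (k, p - j).
Proof.
elim: j p => [|j IH] p H1 H2; rewrite /= ?runD_cons /stepD -/stepD /=; first by rewrite subn0.
have -> : (p == n) = false by lia.
have -> : (p == 0) = false by lia.
rewrite IH; [congr Some; congr pair; lia| lia | lia].
Qed.

Lemma AC_b j p : n <= p < n + j -> j <= p -> runD (Some (1, p)) (AC j) = Some (2, p - j).
Proof.
elim: j p => [|j IH] p H1 H2; rewrite /= ?runD_cons /stepD -/stepD /=; first lia.
case: (eqVneq p n) => [Hpn|Hpn]; [subst p|] => /=.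
  have -> : (n == 0) = false by lia.
  rewrite AC_a; [congr Some; congr pair; lia| lia | lia].
have -> : (p == 0) = false by lia.
rewrite IH; [congr Some; congr pair; lia| lia | lia].
Qed.

Lemma D_run j k p : p + j <= n + n -> runD (Some (k, p)) (nseq j d_) = Some (k, p + j).
Proof.
elim: j p => [|j IH] p H; rewrite /= ?runD_cons /stepD -/stepD /=; first by rewrite addn0.
have -> : (p < n + n) = true by lia.
rewrite IH; [congr Some; congr pair; lia| lia].
Qed.

Fixpoint W k := if k is k'.+1 then W k' ++ AC k' ++ [:: b_] ++ nseq k' d_ ++ W k' else [::].

Lemma runD_cat s w1 w2 : runD s (w1 ++ w2) = runD (runD s w1) w2.
Proof. by rewrite /runD foldl_cat. Qed.

Lemma W_spec k : k <= n.+1 ->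
  (forall i, i < k -> i <= n -> runD (Some (0, n + i)) (W k) = Some (1, n + i)) /\
  (forall i kk, k <= i -> i <= n -> kk <= 1 -> runD (Some (kk, n + i)) (W k) = Some (kk, n + i)).
Proof.
elim: k => [|k IH] Hk; first by split.
have Hkn : k <= n.+1 by lia.
have [IH1' IH2'] := IH Hkn.
have gt : forall i kk, k < i -> i <= n -> kk <= 1 -> runD (Some (kk, n + i)) (W k.+1) = Some (kk, n + i).
  move=> i kk H1 H2 H3 /=.
  rewrite !runD_cat IH2' //; try lia.
  rewrite AC_a; try lia.
  rewrite /= ifF; last lia. rewrite ifF; last lia. rewrite ifF; last lia.
  rewrite ?runD_cons runD_cat D_run; last lia.
  have -> : n + i - k + k = n + i by lia.
  rewrite IH2' //; lia.
split.
  move=> i H1 H2.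
  case: (ltnP i k) => Hik.
    rewrite /= !runD_cat IH1' //.
    rewrite AC_b; try lia.
    rewrite /= ifT; last lia.
    rewrite ?runD_cons runD_cat D_run; last lia.
    have -> : n + i - k + k = n + i by lia.
    by rewrite IH1'.
  have -> : i = k by lia.
  rewrite /= !runD_cat IH2' //; try lia.
  rewrite AC_a; try lia.
  rewrite /= ifF; last lia. rewrite ifT; last lia.
  rewrite ?runD_cons runD_cat D_run; last lia.
  have -> : n + k - k + k = n + k by lia.
  rewrite IH2' //; lia.
move=> i kk H1 H2 H3; apply: gt; lia.
Qed.

Lemma W_exists : exists w, forall i, i <= n -> runD (Some (0, n + i)) w = Some (1, n + i).
Proof.
exists (W n.+1) => i Hi.
have [H _] := W_spec (leqnn n.+1).
apply: H; lia.
Qed.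

Definition tok i w := runD (Some (0, n + i)) w.
Definition ind (s : st) := if s is Some (k, _) then 0 < k else false.
Fixpoint potf (f : nat -> bool) k := if k is k'.+1 then potf f k' + f k' * 2 ^ k' else 0.
Definition pot w := potf (fun i => ind (tok i w)) n.+1.

Lemma potf_ext (f g : nat -> bool) k : (forall i, i < k -> f i = g i) -> potf f k = potf g k.
Proof.
elim: k => [|k IH] H //=. rewrite IH ?H //; move=> i Hi; apply: H; lia.
Qed.

Lemma potf_all (f : nat -> bool) k : (forall i, i < k -> f i) -> potf f k = 2 ^ k - 1.
Proof.
elim: k => [|k IH] H //=. rewrite IH ?H //; last (move=> i Hi; apply: H; lia).
rewrite mul1n expnS. have := expn_gt0 2 k. lia.
Qed.

Lemma potf_step (f g : nat -> bool) s k :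
  (forall i, i < k -> i < s -> f i && ~~ g i) ->
  (forall i, i < k -> i = s -> ~~ f i) ->
  (forall i, i < k -> s < i -> g i = f i) ->
  (k <= s -> potf g k = 0 /\ potf f k = 2 ^ k - 1) /\ (s < k -> potf g k <= potf f k + 1).
Proof.
move=> H1 H2 H3.
elim: k H1 H2 H3 => [|k IH] H1 H2 H3; first by split => //; lia.
have [IHa IHb] : (k <= s -> potf g k = 0 /\ potf f k = 2 ^ k - 1) /\ (s < k -> potf g k <= potf f k + 1).
  by apply: IH => i Hi; [apply: H1|apply: H2|apply: H3]; lia.
split.
  move=> Hks /=. have [-> ->] := IHa ltac:(lia).
  have /andP [-> /negbTE ->] := H1 k (ltnSn k) Hks.
  rewrite /= expnS. have := expn_gt0 2 k. lia.
move=> Hsk /=.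
case: (ltngtP k s) => Hk.
- lia.
- have := IHb Hk. rewrite (H3 k (ltnSn k) Hk). lia.
- have [-> ->] := IHa ltac:(lia).
  rewrite (negbTE (H2 k (ltnSn k) Hk)).
  case: (g k); rewrite /= ?mul1n ?mul0n; have := expn_gt0 2 k; lia.
Qed.

Lemma runD_rcons s w x : runD s (rcons w x) = stepD (runD s w) x.
Proof. by rewrite /runD foldl_rcons. Qed.

Lemma step_shape k p x k' p' : stepD (Some (k, p)) x = Some (k', p') -> k < 3 ->
  k' < 3 /\ (match x with c_ => p' = p.-1 /\ 0 < p | d_ => p' = p.+1 | _ => p' = p end) /\ (x != b_ -> (0 < k') = (0 < k)).
Proof.
case: x => /=; repeat case: ifP => //; move=> *; 
  repeat match goal with H : Some _ = Some _ |- _ => case: H => *; subst end;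
  repeat match goal with H : is_true (_ == _) |- _ => move/eqP: H => H; subst end;
  try discriminate; (split; [lia| split; [try split; lia | try by []]]).
Qed.

Lemma step_b k p k' p' : stepD (Some (k, p)) b_ = Some (k', p') -> k < 3 ->
  (p < n -> 0 < k /\ ~~ (0 < k')) /\ (p = n -> ~~ (0 < k)) /\ (n < p -> (0 < k') = (0 < k)).
Proof.
rewrite /=; repeat case: ifP => //; move=> *;
  repeat match goal with H : Some _ = Some _ |- _ => case: H => *; subst end;
  repeat match goal with H : is_true (_ == _) |- _ => move/eqP: H => H; subst end;
  try discriminate; split; lia.
Qed.

Lemma inv w : (forall i, i <= n -> tok i w != None) ->
  (exists t, forall i, i <= n -> exists k, k < 3 /\ tok i w = Some (k, t + i)) /\ pot w <= size w.
Proof.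
elim/last_ind: w => [|w x IH] Hn.
  split; last first. rewrite /pot (@potf_ext _ (fun _ => false)); last by move=> i _. have -> : forall m, potf (fun _ => false) m = 0 by elim => //= m ->. by [].

  by exists n => i _; exists 0.
have Hn' : forall i, i <= n -> tok i w != None.
  move=> i Hi; have := Hn i Hi; rewrite /tok runD_rcons.
  by case: (runD _ w).
have [[t Ht] Hp] := IH Hn'.
have Hst : forall i, i <= n -> exists k k' p', k < 3 /\ tok i w = Some (k, t + i) /\ stepD (Some (k, t + i)) x = Some (k', p').
  move=> i Hi. have [k [Hk E]] := Ht i Hi. have := Hn i Hi.
  rewrite /tok runD_rcons -/(tok i w) E.
  case E2: (stepD _ x) => [[k' p']|] // _.
  by exists k, k', p'.
have Etok : forall i, tok i (rcons w x) = stepD (tok i w) x.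
  by move=> i; rewrite /tok runD_rcons.
rewrite size_rcons.
case Hx: x.
-
  subst x; split.
    exists t => i Hi. have [k [k' [p' [Hk [E1 E2]]]]] := Hst i Hi.
    have [? [? _]] := step_shape E2 Hk. exists k'; split => //. by rewrite Etok E1 E2; subst.
  rewrite /pot (@potf_ext _ (fun i => ind (tok i w)) n.+1); first by move: Hp; rewrite /pot; lia.
  move=> i Hi. have [k [k' [p' [Hk [E1 E2]]]]] := Hst i ltac:(lia).
  have [_ [_ H3]] := step_shape E2 Hk. by rewrite Etok E1 E2 /= H3.
-
  subst x; split.
    exists t => i Hi. have [k [k' [p' [Hk [E1 E2]]]]] := Hst i Hi.
    have [? [? _]] := step_shape E2 Hk. exists k'; split => //. by rewrite Etok E1 E2; subst.
  have key : forall i, i <= n ->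
    (t + i < n -> ind (tok i w) && ~~ ind (tok i (rcons w b_))) /\ (t + i = n -> ~~ ind (tok i w)) /\ (n < t + i -> ind (tok i (rcons w b_)) = ind (tok i w)).
    move=> i Hi. have [k [k' [p' [Hk [E1 E2]]]]] := Hst i Hi.
    have [H1 [H2 H3]] := step_b E2 Hk. rewrite Etok E1 E2 /=.
    split; [move=> /H1 [-> ->] // | split; [by [] | by []]].
  case: (leqP t n) => Htn.
    have P1 : forall i, i < n.+1 -> i < n - t -> ind (tok i w) && ~~ ind (tok i (rcons w b_)).
      move=> i Hi Hs. by have [H1 _] := key i ltac:(lia); apply: H1; lia.
    have P2 : forall i, i < n.+1 -> i = n - t -> ~~ ind (tok i w).
      move=> i Hi Hs. by have [_ [H2 _]] := key i ltac:(lia); apply: H2; lia.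
    have P3 : forall i, i < n.+1 -> n - t < i -> ind (tok i (rcons w b_)) = ind (tok i w).
      move=> i Hi Hs. by have [_ [_ H3]] := key i ltac:(lia); apply: H3; lia.
    have [_ H] := @potf_step (fun i => ind (tok i w)) (fun i => ind (tok i (rcons w b_))) (n - t) n.+1 P1 P2 P3.
    have := H ltac:(lia). move: Hp. rewrite /pot. lia.
  rewrite /pot (@potf_ext _ (fun i => ind (tok i w)) n.+1); first by move: Hp; rewrite /pot; lia.
  move=> i Hi. have [_ [_ H3]] := key i ltac:(lia). apply: H3; lia.
-
  subst x. have [k0 [k0' [p0' [Hk0 [E10 E20]]]]] := Hst 0 ltac:(lia).
  have [_ [[_ Ht0] _]] := step_shape E20 Hk0.
  split.
    exists t.-1 => i Hi. have [k [k' [p' [Hk [E1 E2]]]]] := Hst i Hi.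
    have [? [[? ?] _]] := step_shape E2 Hk. exists k'; split => //. rewrite Etok E1 E2; subst.
    congr Some; congr pair; lia.
  rewrite /pot (@potf_ext _ (fun i => ind (tok i w)) n.+1); first by move: Hp; rewrite /pot; lia.
  move=> i Hi. have [k [k' [p' [Hk [E1 E2]]]]] := Hst i ltac:(lia).
  have [_ [_ H3]] := step_shape E2 Hk. by rewrite Etok E1 E2 /= H3.
-
  subst x; split.
    exists t.+1 => i Hi. have [k [k' [p' [Hk [E1 E2]]]]] := Hst i Hi.
    have [? [? _]] := step_shape E2 Hk. exists k'; split => //. rewrite Etok E1 E2; subst.
    congr Some; congr pair; lia.
  rewrite /pot (@potf_ext _ (fun i => ind (tok i w)) n.+1); first by move: Hp; rewrite /pot; lia.
  move=> i Hi. have [k [k' [p' [Hk [E1 E2]]]]] := Hst i ltac:(lia).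
  have [_ [_ H3]] := step_shape E2 Hk. by rewrite Etok E1 E2 /= H3.
-
  subst x. have [k0 [k0' [p0' [Hk0 [E10 E20]]]]] := Hst 0 ltac:(lia). by [].
Qed.

Lemma lower_bound w : (forall i, i <= n -> exists p, tok i w = Some (1, p)) -> 2 ^ n.+1 <= (size w).+1.
Proof.
move=> H.
have [_ Hp] := inv (w := w) ltac:(by move=> i Hi; have [p ->] := H i Hi).
have : pot w = 2 ^ n.+1 - 1.
  rewrite /pot potf_all // => i Hi. by have [p ->] := H i ltac:(lia).
have := expn_gt0 2 n.+1. lia.
Qed.
End Counter.

Fixpoint hgt (f : form unit act5) : nat :=
  match f with
  | FProp _ => 0
  | FNeg g => (hgt g).+1
  | FOr g h => (maxn (hgt g) (hgt h)).+1
  | FAnd g h => (maxn (hgt g) (hgt h)).+1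
  | FDia _ _ g => (hgt g).+1
  | FBox _ g => (hgt g).+1
  end.

Fixpoint fsz (f : form unit act5) : nat :=
  match f with
  | FProp _ => 0
  | FNeg g => (fsz g).+1
  | FOr g h => (fsz g + fsz h).+1
  | FAnd g h => (fsz g + fsz h).+1
  | FDia _ _ g => (fsz g).+1
  | FBox _ g => (fsz g).+1
  end.

Fixpoint spine (f : form unit act5) : seq (form unit act5) :=
  f :: match f with
       | FProp _ => [::]
       | FNeg g => spine g
       | FOr g h => if hgt h <= hgt g then spine g else spine h
       | FAnd g h => if hgt h <= hgt g then spine g else spine h
       | FDia _ _ g => spine g
       | FBox _ g => spine g
       end.

Lemma spine_size f : size (spine f) = (hgt f).+1.
Proof.
elim: f => [r|g IH|g IHg h IHh|g IHg h IHh|x k g IH|x g IH] //=; try by rewrite IH.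
- case: ifP => H; [rewrite IHg|rewrite IHh]; congr S; lia.
- case: ifP => H; [rewrite IHg|rewrite IHh]; congr S; lia.
Qed.

Lemma spine_sub f : {subset spine f <= subf f}.
Proof.
elim: f => [r|g IH|g IHg h IHh|g IHg h IHh|x k g IH|x g IH] y /=; rewrite !in_cons //;
  case/orP => [->//|H]; apply/orP; right; rewrite ?mem_cat.
- by apply: IH.
- by case: ifP H => _ H; [rewrite IHg|rewrite IHh ?orbT].
- by case: ifP H => _ H; [rewrite IHg|rewrite IHh ?orbT].
- by apply: IH.
- by apply: IH.
Qed.

Lemma spine_fsz f : forall g, g \in spine f -> fsz g <= fsz f.
Proof.
elim: f => [r|g IH|g IHg h IHh|g IHg h IHh|x k g IH|x g IH] y /=; first by rewrite inE => /eqP ->.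
all: rewrite !in_cons; case/orP => [/eqP->//|H] /=.
- have := IH _ H; lia.
- case: ifP H => _ H; [have := IHg _ H|have := IHh _ H]; lia.
- case: ifP H => _ H; [have := IHg _ H|have := IHh _ H]; lia.
- have := IH _ H; lia.
- have := IH _ H; lia.
Qed.

Lemma spine_uniq f : uniq (spine f).
Proof.
have nin : forall (f : form unit act5) (l : seq (form unit act5)), (forall g, g \in l -> fsz g < fsz f) -> f \notin l.
  move=> f0 l H; apply/negP => /H; lia.
elim: f => [r|g IH|g IHg h IHh|g IHg h IHh|x k g IH|x g IH] /=; rewrite ?IH ?andbT //.
- apply: nin => y /spine_fsz /=; lia.
- case: ifP => _; [rewrite IHg andbT; apply: nin => y /spine_fsz /=; lia
                 | rewrite IHh andbT; apply: nin => y /spine_fsz /=; lia].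
- case: ifP => _; [rewrite IHg andbT; apply: nin => y /spine_fsz /=; lia
                 | rewrite IHh andbT; apply: nin => y /spine_fsz /=; lia].
- apply: nin => y /spine_fsz /=; lia.
- apply: nin => y /spine_fsz /=; lia.
Qed.

Lemma hgt_sz f : (hgt f).+1 <= sz f.
Proof.
rewrite -spine_size /sz; apply: uniq_leq_size; first exact: spine_uniq.
by move=> y /spine_sub; rewrite mem_undup.
Qed.

Lemma card_s1I (T : finType) (a : T) (X : {set T}) : #|[set a] :&: X| = (a \in X).
Proof.
case: (boolP (a \in X)) => H.
  by rewrite (setIidPl _) ?cards1 // sub1set.
have -> : [set a] :&: X = set0.
  apply/setP => y; rewrite !inE; apply/andP => -[/eqP -> ]; by rewrite (negbTE H).
by rewrite cards0.
Qed.

Section Det.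
Variable K : kripke unit act5.
Variable nx : 'I_(nst K) -> act5 -> 'I_(nst K).
Variable D : 'I_(nst K) -> Prop.
Hypothesis HD : forall q x, D q -> delta q x = [set nx q x] /\ D (nx q x).
Variable Op' : fragment unit act5.
Hypothesis Hval : forall o, Op' o -> valid_op o.
Hypothesis Hnneg : ~ Op' (ONeg _ _).

Lemma lemA : ~ Op' (OOr _ _) -> forall g, in_frag Op' g -> forall S : 'I_(nst K) -> Prop,
  (forall q, S q -> D q) -> (forall q, S q -> sat q g) ->
  exists w, size w <= hgt g /\ forall q, S q -> lab (foldl nx q w) tt.
Proof.
move=> Hnor.
elim => [r|g IH|g IHg h IHh|g IHg h IHh|x k g IH|x g IH] /= Hf S HSD HS.
- exists [::]; split => // q Sq; case: r Hf HS => _ HS; exact: HS.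
- by case: Hf.
- by case: Hf.
- case: Hf => _ [Hg _].
  have [w [Hw Hl]] := IHg Hg S HSD (fun q Sq => proj1 (andP (HS q Sq))).
  exists w; split => //; lia.
- case: Hf => Hop Hg. have Hk : 1 <= k := Hval Hop.
  pose S' q' := exists q, S q /\ q' = nx q x.
  have HS'D : forall q', S' q' -> D q' by move=> _ [q [Sq ->]]; exact: (@HD q x (HSD q Sq)).2.
  have HS' : forall q', S' q' -> sat q' g.
    move=> _ [q [Sq ->]]. have := HS q Sq. rewrite (@HD q x (HSD q Sq)).1 card_s1I inE.
    by case: (sat _ g) => //=; lia.
  have [w [Hw Hl]] := IH Hg S' HS'D HS'.
  exists (x :: w); split; first by rewrite /=; lia.
  move=> q Sq /=. apply: Hl. by exists q.
- case: Hf => Hop Hg.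
  pose S' q' := exists q, S q /\ q' = nx q x.
  have HS'D : forall q', S' q' -> D q' by move=> _ [q [Sq ->]]; exact: (@HD q x (HSD q Sq)).2.
  have HS' : forall q', S' q' -> sat q' g.
    move=> _ [q [Sq ->]]. have := HS q Sq. by rewrite (@HD q x (HSD q Sq)).1 sub1set inE.
  have [w [Hw Hl]] := IH Hg S' HS'D HS'.
  exists (x :: w); split; first by rewrite /=; lia.
  move=> q Sq /=. apply: Hl. by exists q.
Qed.

Lemma lemB : ~ Op' (OAnd _ _) -> (forall al k, 2 <= k -> ~ Op' (ODia _ al k)) ->
  forall g, in_frag Op' g -> forall S : 'I_(nst K) -> Prop,
  (forall q, S q -> D q) -> (forall q, S q -> ~~ sat q g) ->
  exists w, size w <= hgt g /\ forall q, S q -> ~~ lab (foldl nx q w) tt.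
Proof.
move=> Hnand Hk2.
elim => [r|g IH|g IHg h IHh|g IHg h IHh|x k g IH|x g IH] /= Hf S HSD HS.
- exists [::]; split => // q Sq; case: r Hf HS => _ HS; exact: HS.
- by case: Hf.
- case: Hf => _ [Hg _].
  have [w [Hw Hl]] := IHg Hg S HSD (fun q Sq => proj1 (norP (HS q Sq))).
  exists w; split => //; lia.
- by case: Hf.
- case: Hf => Hop Hg. have Hk : 1 <= k := Hval Hop.
  have Hk1 : k = 1 by case: (leqP 2 k) => H; [case: (Hk2 _ _ H Hop)| lia].
  subst k.
  pose S' q' := exists q, S q /\ q' = nx q x.
  have HS'D : forall q', S' q' -> D q' by move=> _ [q [Sq ->]]; exact: (@HD q x (HSD q Sq)).2.
  have HS' : forall q', S' q' -> ~~ sat q' g.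
    move=> _ [q [Sq ->]]. have := HS q Sq. rewrite (@HD q x (HSD q Sq)).1 card_s1I inE.
    by case: (sat _ g).
  have [w [Hw Hl]] := IH Hg S' HS'D HS'.
  exists (x :: w); split; first by rewrite /=; lia.
  move=> q Sq /=. apply: Hl. by exists q.
- case: Hf => Hop Hg.
  pose S' q' := exists q, S q /\ q' = nx q x.
  have HS'D : forall q', S' q' -> D q' by move=> _ [q [Sq ->]]; exact: (@HD q x (HSD q Sq)).2.
  have HS' : forall q', S' q' -> ~~ sat q' g.
    move=> _ [q [Sq ->]]. have := HS q Sq. by rewrite (@HD q x (HSD q Sq)).1 sub1set inE.
  have [w [Hw Hl]] := IH Hg S' HS'D HS'.
  exists (x :: w); split; first by rewrite /=; lia.
  move=> q Sq /=. apply: Hl. by exists q.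
Qed.

Definition chainB (w : seq act5) : form unit act5 := foldr (fun x g => FBox x g) (FProp act5 tt) w.
Definition chainD (w : seq act5) : form unit act5 := foldr (fun x g => FDia x 1 g) (FProp act5 tt) w.

Lemma chain_sat w : forall q, D q ->
  sat q (chainB w) = lab (foldl nx q w) tt /\ sat q (chainD w) = lab (foldl nx q w) tt.
Proof.
elim: w => [|x w IH] q Dq //=.
have [E Dn] := HD x Dq.
rewrite E sub1set card_s1I !inE. have [<- <-] := IH _ Dn. by case: sat.
Qed.
End Det.

Lemma chain_frag (Op' : fragment unit act5) w : Op' (OProp _ tt) ->
  ((forall al, Op' (OBox _ al)) -> in_frag Op' (chainB w)) /\
  ((forall al, Op' (ODia _ al 1)) -> in_frag Op' (chainD w)).
Proof.
move=> Hp; split => H; elim: w => [|x w IH] //=.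
Qed.

Lemma nullsat (K : kripke unit act5) (t : 'I_(nst K)) (Op' : fragment unit act5) :
  (forall x, delta t x = [set t]) -> ~~ lab t tt ->
  (forall o, Op' o -> valid_op o) -> ~ Op' (ONeg _ _) ->
  forall g, in_frag Op' g -> ~~ sat t g.
Proof.
move=> Ht Hl Hval Hnneg.
elim => [r|g IH|g IHg h IHh|g IHg h IHh|x k g IH|x g IH] /= Hf.
- by case: r Hf.
- by case: Hf.
- case: Hf => _ [Hg Hh]. by rewrite negb_or IHg // IHh.
- case: Hf => _ [Hg Hh]. by rewrite negb_and IHg.
- case: Hf => Hop Hg. have Hk : 1 <= k := Hval _ Hop.
  rewrite Ht card_s1I inE (negbTE (IH Hg)) /=. lia.
- case: Hf => Hop Hg. by rewrite Ht sub1set inE IH.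
Qed.

Lemma univ_chainD (K : kripke unit act5) (s : 'I_(nst K)) :
  (forall x, delta s x = [set s]) -> lab s tt -> forall w, sat s (chainD w).
Proof.
move=> Hs Hl; elim => [|x w IH] //=. by rewrite Hs card_s1I inE IH.
Qed.

Lemma rootB (K1 K2 : kripke unit act5) (r1 t1 : 'I_(nst K1)) (r2 : 'I_(nst K2))
  (B2 : {set 'I_(nst K2)}) (nx : 'I_(nst K2) -> act5 -> 'I_(nst K2)) (D : 'I_(nst K2) -> Prop)
  (HD : forall q x, D q -> delta q x = [set nx q x] /\ D (nx q x))
  (Op' : fragment unit act5) :
  (forall x, t1 \in delta r1 x) -> (forall x, delta t1 x = [set t1]) -> ~~ lab t1 tt -> ~~ lab r1 tt ->
  (forall x, delta r2 x = B2) -> (forall q, q \in B2 -> D q) ->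
  (forall o, Op' o -> valid_op o) -> ~ Op' (ONeg _ _) -> ~ Op' (OAnd _ _) ->
  (forall al k, 2 <= k -> ~ Op' (ODia _ al k)) ->
  forall f, in_frag Op' f -> sat r1 f -> ~~ sat r2 f ->
  exists w, size w < hgt f /\ forall q, q \in B2 -> ~~ lab (foldl nx q w) tt.
Proof.
move=> Ht Htn Htl Hr1 Hr2 HB2 Hval Hnneg Hnand Hk2.
elim => [r|g IH|g IHg h IHh|g IHg h IHh|x k g IH|x g IH] /= Hf H1 H2.
- by case: r Hf H1 H2 => _; rewrite (negbTE Hr1).
- by case: Hf.
- case: Hf => _ [Hg Hh]. rewrite negb_or in H2. case/andP: H2 => H2g H2h.
  case/orP: H1 => H1.
    have [w [Hw Hl]] := IHg Hg H1 H2g. exists w; split => //; lia.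
  have [w [Hw Hl]] := IHh Hh H1 H2h. exists w; split => //; lia.
- by case: Hf.
- case: Hf => Hop Hg. have Hk : 1 <= k := Hval _ Hop.
  have Hk1 : k = 1 by case: (leqP 2 k) => H; [case: (Hk2 _ _ H Hop)| lia].
  subst k.
  have HS : forall q, q \in B2 -> ~~ sat q g.
    move=> q Hq; apply/negP => Hs. move/negP: H2; apply.
    rewrite Hr2 card_gt0; apply/set0Pn; exists q; by rewrite !inE Hq Hs.
  have [w [Hw Hl]] := lemB HD Hval Hnneg Hnand Hk2 Hg HB2 HS.
  exists w; split => //; lia.
- case: Hf => Hop Hg. exfalso.
  have := subsetP H1 t1 (Ht x). rewrite inE. apply/negP. exact: nullsat Htn Htl Hval Hnneg g Hg.
Qed.

Lemma dout N (dl : 'I_N -> act5 -> {set 'I_N}) :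
  forall q (al : act5), ~~ (predT al : bool) -> dl q al = set0.
Proof. by []. Qed.

Definition mkK (N : nat) (I : {set 'I_N.+1}) (HI : I != set0)
  (dl : 'I_N.+1 -> act5 -> {set 'I_N.+1}) (lb : 'I_N.+1 -> bool) : kripke unit act5 :=
  @Kripke unit act5 N.+1 (ltn0Sn N) I HI predT (ex_intro _ a_ isT) dl (@dout _ dl)
    predT (fun q _ => lb q) (fun _ _ _ => isT).

Section CK.
Variable n : nat.
Definition mC := (n + n).+1.
Definition dec (q : nat) : st := if q < 3 * mC then Some (q %% 3, q %/ 3) else None.
Definition enc (s : st) : nat := if s is Some (k, p) then p * 3 + k else 3 * mC.
Definition valid (s : st) := if s is Some (k, p) then (k < 3) && (p < mC) else true.
Notation QC := 'I_(3 * mC).+2.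
Definition nxC (q : QC) (x : act5) : QC := inord (enc (stepD n (dec q) x)).
Definition BC : {set QC} := [set (inord (enc (Some (0, n + val i))) : QC) | i : 'I_n.+1].
Definition dC (q : QC) (x : act5) : {set QC} := if val q == (3 * mC).+1 then BC else [set nxC q x].
Definition labC (flip : bool) (q : QC) : bool := flip (+) (if dec q is Some (k, _) then k == 1 else false).

Lemma dec_valid q : valid (dec q).
Proof. rewrite /dec /valid /mC; case: ifP => //= H. apply/andP; split; lia. Qed.

Lemma step_valid s x : valid s -> valid (stepD n s x).
Proof.
case: s => [[k p]|] //= /andP [Hk Hp]; rewrite /mC in Hp *.
case: x => /=; repeat case: ifP => //= *; try (apply/andP; split); rewrite /mC; lia.
Qed.

Lemma run_valid s w : valid s -> valid (runD n s w).
Proof. elim: w s => [|x w IH] s H //=. by apply: IH; apply: step_valid. Qed.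

Lemma enc_le s : valid s -> enc s <= 3 * mC.
Proof. case: s => [[k p]|] //= /andP [Hk Hp]; lia. Qed.

Lemma dec_enc s : valid s -> dec (enc s) = s.
Proof.
case: s => [[k p]|] /=; last by rewrite /dec ltnn.
move=> /andP [Hk Hp]. rewrite /dec ifT; last lia.
congr Some; congr pair; lia.
Qed.

Lemma runC w s : valid s -> val (foldl nxC (inord (enc s)) w) = enc (runD n s w).
Proof.
elim: w s => [|x w IH] s H /=.
  rewrite inordK //; have := enc_le H; lia.
have -> : nxC (inord (enc s)) x = inord (enc (stepD n s x)).
  rewrite /nxC inordK ?dec_enc //; have := enc_le H; lia.
by rewrite IH //; apply: step_valid.
Qed.

Lemma HDC : forall q x, (fun q : QC => val q < (3 * mC).+1) q ->
  dC q x = [set nxC q x] /\ (fun q : QC => val q < (3 * mC).+1) (nxC q x).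
Proof.
move=> q x /= Hq; split; first by rewrite /dC ltn_eqF.
rewrite /nxC inordK; have := enc_le (step_valid x (dec_valid q)); lia.
Qed.

Lemma BC_D q : q \in BC -> val q < (3 * mC).+1.
Proof.
case/imsetP => i _ ->. rewrite /= inordK /mC /=; have := ltn_ord i; lia.
Qed.

Lemma tok_in (i : nat) : i <= n -> (inord (enc (Some (0, n + i))) : QC) \in BC.
Proof.
move=> Hi. have -> : n + i = n + val (inord i : 'I_n.+1) by rewrite /= inordK.
exact: (imset_f (fun i0 : 'I_n.+1 => (inord (enc (Some (0, n + val i0))) : QC))).
Qed.

Lemma lab_run flip i w : i <= n ->
  labC flip (foldl nxC (inord (enc (Some (0, n + i)))) w) =
  flip (+) (if tok n i w is Some (k, _) then k == 1 else false).
Proof.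
move=> Hi. have Hv : valid (Some (0, n + i)) by rewrite /= /mC; lia.
rewrite /labC runC // dec_enc //; exact: run_valid.
Qed.

Lemma tok1 i w : (if tok n i w is Some (k, _) then k == 1 else false) ->
  exists p, tok n i w = Some (1, p).
Proof. case: (tok n i w) => [[k p]|] // /eqP ->; by exists p. Qed.
End CK.

Lemma fin_arith n z c : 2 ^ n.+1 <= z -> c <= 25 * n.+1 -> 2 ^ c <= z ^ 25.
Proof.
move=> H1 H2. apply: (leq_trans (leq_pexp2l (isT : 0 < 2) H2)).
rewrite mulnC expnM leq_exp2r //.
Qed.

Lemma BC_ne n : BC n != set0.
Proof. apply/set0Pn; exists (inord (enc n (Some (0, n + 0)))); exact: tok_in. Qed.

Lemma s1_ne N : [set (ord0 : 'I_N.+1)] != set0.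
Proof. apply/set0Pn; exists ord0; by rewrite inE. Qed.

Lemma smax_ne N : [set (ord_max : 'I_N.+1)] != set0.
Proof. apply/set0Pn; exists ord_max; by rewrite inE. Qed.

Definition KA n : kripke unit act5 := @mkK (3 * mC n).+1 (BC n) (BC_ne n) (@dC n) (@labC n false).
Definition KB n : kripke unit act5 := @mkK (3 * mC n).+1 [set ord_max] (smax_ne _) (@dC n) (@labC n true).
Definition K0 : kripke unit act5 := @mkK 0 [set ord0] (s1_ne 0) (fun q _ => [set q]) (fun _ => false).
Definition d3 (q : 'I_3) (x : act5) : {set 'I_3} := if q == ord0 then [set inord 1; inord 2] else [set q].
Definition K3 : kripke unit act5 := @mkK 2 [set ord0] (s1_ne 2) d3 (fun q => val q == 1).

Lemma tokens_lb n w : (forall i, i <= n -> exists p, tok n i w = Some (1, p)) ->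
  forall f, size w <= hgt f -> forall c, c <= 25 * n.+1 -> 2 ^ c <= sz f ^ 25.
Proof.
move=> H f Hw c Hc. apply: fin_arith Hc.
apply: leq_trans (lower_bound H) _. apply: leq_trans (hgt_sz f). lia.
Qed.

Theorem proposition5 (Op' : fragment unit act5) :
  (forall o, Op' o -> valid_op o) ->
  monotone Op' ->
  Op' (OProp _ tt) ->
  (forall al k, 2 <= k -> ~ Op' (ODia _ al k)) ->
  ((forall al, Op' (OBox _ al)) \/ (forall al, Op' (ODia _ al 1))) ->
  (Op' (OAnd _ _) -> forall al, Op' (OBox _ al)) ->
  (Op' (OOr _ _) -> forall al, Op' (ODia _ al 1)) ->
  forall n : nat,
    exists Pos Neg : seq (kripke unit act5),
      NoDup (Pos ++ Neg) /\
      let k := total_states (Pos ++ Neg) in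
      n <= k /\
      (exists f, in_frag Op' f /\ separating Pos Neg f) /\
      (forall f, in_frag Op' f -> separating Pos Neg f -> 2 ^ k <= sz f ^ 25).
Proof.
move=> Hval [Hnneg Hmono] Hp Hk2 Hall Hand Hor n.
have [w0 Hw0] := W_exists n.
have caseA : ~ Op' (OOr _ _) -> (forall al, Op' (OBox _ al)) ->
    exists Pos Neg : seq (kripke unit act5),
      NoDup (Pos ++ Neg) /\
      let k := total_states (Pos ++ Neg) in
      n <= k /\
      (exists f, in_frag Op' f /\ separating Pos Neg f) /\
      (forall f, in_frag Op' f -> separating Pos Neg f -> 2 ^ k <= sz f ^ 25).
  move=> Hnor Hbox.
  exists [:: KA n], [:: K0]. split.
    constructor; last by constructor; [by []| constructor].
    by move=> [H|[]]; have := f_equal (@nst _ _) H.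
  have -> : total_states ([:: KA n] ++ [:: K0]) = 6 * n + 6 by rewrite /total_states /= /mC; lia.
  cbv zeta. split; first lia. split.
    exists (chainB w0); split; first exact: (proj1 (chain_frag w0 Hp) Hbox).
    split => K.
      case=> [<-|[]] q Hq.
      rewrite (proj1 (@chain_sat (KA n) (@nxC n) (fun q => val q < (3 * mC n).+1) (@HDC n) w0 q (BC_D Hq))).
      case/imsetP: Hq => i _ ->. have Hi : val i <= n := ltn_ord i.
      have E := @lab_run n false i w0 Hi. rewrite /= in E *. by rewrite E /tok Hw0 //= eqxx.
    case=> [<-|[]] HM.
    have := HM ord0 (set11 _). apply/negP.
    exact: (@nullsat K0 ord0 Op' (fun x => erefl) isT Hval Hnneg _ (proj1 (chain_frag w0 Hp) Hbox)).
  move=> f Hf [HP _].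
  have HPs := HP (KA n) (or_introl erefl).
  have [w [Hw Hl]] := @lemA (KA n) (@nxC n) (fun q => val q < (3 * mC n).+1) (@HDC n) Op' Hval Hnneg Hnor f Hf
      (fun q => q \in BC n) (@BC_D n) HPs.
  apply: (@tokens_lb n w) => //; last lia.
  move=> i Hi. apply: tok1. move: (Hl _ (tok_in Hi)). have E := @lab_run n false i w Hi. rewrite /= in E *. by rewrite E.
have caseB : ~ Op' (OAnd _ _) -> (forall al, Op' (ODia _ al 1)) ->
    exists Pos Neg : seq (kripke unit act5),
      NoDup (Pos ++ Neg) /\
      let k := total_states (Pos ++ Neg) in
      n <= k /\
      (exists f, in_frag Op' f /\ separating Pos Neg f) /\
      (forall f, in_frag Op' f -> separating Pos Neg f -> 2 ^ k <= sz f ^ 25).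
  move=> Hnand Hdia.
  have i1 : (inord 1 : 'I_3) == ord0 = false by apply/negbTE; apply/eqP => /(f_equal val); rewrite /= inordK.
  have i2 : (inord 2 : 'I_3) == ord0 = false by apply/negbTE; apply/eqP => /(f_equal val); rewrite /= inordK.
  have d0 : forall x, @delta _ _ K3 ord0 x = [set inord 1; inord 2] by [].
  have d1 : forall x, @delta _ _ K3 (inord 1) x = [set inord 1] by move=> x; rewrite /= /d3 i1.
  have d2 : forall x, @delta _ _ K3 (inord 2) x = [set inord 2] by move=> x; rewrite /= /d3 i2.
  have l1 : @lab _ _ K3 (inord 1) tt by rewrite /= inordK.
  have l2 : ~~ @lab _ _ K3 (inord 2) tt by rewrite /= inordK.
  have dm : forall x, @delta _ _ (KB n) ord_max x = BC n by move=> x; rewrite /= /dC eqxx.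
  exists [:: K3], [:: KB n]. split.
    constructor; last by constructor; [by []| constructor].
    by move=> [H|[]]; have := f_equal (@nst _ _) H; rewrite /= /mC; lia.
  have -> : total_states ([:: K3] ++ [:: KB n]) = 6 * n + 8 by rewrite /total_states /= /mC; lia.
  cbv zeta. split; first lia. split.
    exists (FDia a_ 1 (chainD w0)); split; first by split; [exact: Hdia | exact: (proj2 (chain_frag w0 Hp) Hdia)].
    split => K.
      case=> [<-|[]] q; rewrite inE => /eqP -> /=.
      rewrite card_gt0; apply/set0Pn; exists (inord 1).
      rewrite !inE eqxx /=. exact: (@univ_chainD K3 (inord 1) d1 l1 w0).
    case=> [<-|[]] HM.
    have := HM ord_max (set11 _). rewrite /= /dC eqxx card_gt0. move/set0Pn => [q].
    rewrite !inE => /andP [Hq].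
    rewrite (proj2 (@chain_sat (KB n) (@nxC n) (fun q => val q < (3 * mC n).+1) (@HDC n) w0 q (BC_D Hq))).
    case/imsetP: Hq => i _ ->. have Hi : val i <= n := ltn_ord i.
    have E := @lab_run n true i w0 Hi. rewrite /= in E *. by rewrite E /tok Hw0 //= eqxx.
  move=> f Hf [HP HN].
  have HPs : sat (ord0 : 'I_(nst K3)) f by apply: (HP K3 (or_introl erefl)); rewrite inE.
  have HNs : ~~ sat (ord_max : 'I_(nst (KB n))) f.
    apply/negP => H; apply: (HN (KB n) (or_introl erefl)) => q; rewrite inE => /eqP ->; exact: H.
  have [w [Hw Hl]] := @rootB K3 (KB n) ord0 (inord 2) ord_max (BC n) (@nxC n)
      (fun q => val q < (3 * mC n).+1) (@HDC n) Op'
      (fun x => ltac:(by rewrite d0 !inE eqxx orbT)) d2 l2 isT dm (@BC_D n) Hval Hnneg Hnand Hk2 f Hf HPs HNs.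
  apply: (@tokens_lb n w) => //; [|lia|lia].
  move=> i Hi. apply: tok1. move: (Hl _ (tok_in Hi)). have E := @lab_run n true i w Hi. rewrite /= in E *.
  by rewrite E negbK.
case: (classic (Op' (OOr _ _))) => Hor'.
  by apply: caseB; [move=> Ha; apply: Hmono | exact: Hor].
case: Hall => Hall; first exact: caseA.
case: (classic (Op' (OAnd _ _))) => Ha.
  by apply: caseA => //; exact: Hand.
exact: caseB.
Qed.
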